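(* Consider the model below. A pair $(\mathbf A^\ddagger,\mathbf q^\ddagger)\in\mathcal A\times\mathbb R^n_{\ge0}$ maximizes aggregate profit $\Pi$ over $\mathcal A\times\mathbb R^n_{\ge 0}$ if and only if there is a pair $(\mathbf A^\dagger,\mathbf q^\dagger)$ maximizing total surplus $\Omega$ over $\mathcal A\times\mathbb R^n_{\ge0}$ with $\mathbf A^\ddagger=\mathbf A^\dagger$ and $\mathbf q^\ddagger=\mathbf q^\dagger/2$. Consequently, for such pairs, $\Omega(\mathbf A^\ddagger,\mathbf q^\ddagger)/\Omega(\mathbf A^\dagger,\mathbf q^\dagger)=3/4$.
   Context: Model: integers $n\ge2$ (firms) and $m\ge2$ (common characteristics); parameters $\alpha>0$, $\boldsymbol\beta\in\mathbb R^m$ with $\|\boldsymbol\beta\|_2=1$, and $\boldsymbol\gamma\in\mathbb R^n$ with $\gamma_i>0$ for all $i$. $\mathcal A$ is the set of real $m\times n$ matrices $\mathbf A=[\mathbf a_1,\dots,\mathbf a_n]$ with $\|\mathbf a_i\|_2=1$ for all $i$; an output profile is $\mathbf q\in\mathbb R^n_{\ge 0}$. With $\mathbf x=\mathbf A\mathbf q$, total surplus is $\Omega(\mathbf A,\mathbf q)=\alpha(\mathbf x^\top\boldsymbol\beta-\tfrac12\mathbf x^\top\mathbf x)+\mathbf q^\top\boldsymbol\gamma-\tfrac12\mathbf q^\top\mathbf q$ and aggregate profit is $\Pi(\mathbf A,\mathbf q)=\alpha(\mathbf x^\top\boldsymbol\beta-\mathbf x^\top\mathbf x)+\mathbf q^\top\boldsymbol\gamma-\mathbf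 q^\top\mathbf q$. *)

(* Defs.v *)
From HB Require Import structures.
From mathcomp Require Import all_boot all_order all_algebra.
From mathcomp Require Import reals.
Set Implicit Arguments. Unset Strict Implicit. Unset Printing Implicit Defensive.
Import Order.TTheory GRing.Theory Num.Theory.
Local Open Scope ring_scope.

Section Model.
Variables (R : realType) (m n : nat).

Definition sqnorm k (v : 'cV[R]_k) : R := \sum_(i < k) v i 0 ^+ 2.

Definition in_calA (A : 'M[R]_(m, n)) : Prop :=
  forall i : 'I_n, Num.sqrt (sqnorm (col i A)) = 1.

Definition nonneg_vec (q : 'cV[R]_n) : Prop := forall i : 'I_n, 0 <= q i 0.

Definition dotv k (u v : 'cV[R]_k) : R := (u^T *m v) 0 0.

Definition Omega (alpha : R) (beta : 'cV[R]_m) (gamma : 'cV[R]_n)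
  (A : 'M[R]_(m, n)) (q : 'cV[R]_n) : R :=
  let x := A *m q in
  alpha * (dotv x beta - 2^-1 * dotv x x) + dotv q gamma - 2^-1 * dotv q q.

Definition Pi (alpha : R) (beta : 'cV[R]_m) (gamma : 'cV[R]_n)
  (A : 'M[R]_(m, n)) (q : 'cV[R]_n) : R :=
  let x := A *m q in
  alpha * (dotv x beta - dotv x x) + dotv q gamma - dotv q q.

Definition is_maximizer (F : 'M[R]_(m, n) -> 'cV[R]_n -> R)
  (A : 'M[R]_(m, n)) (q : 'cV[R]_n) : Prop :=
  [/\ in_calA A, nonneg_vec q &
      forall A' q', in_calA A' -> nonneg_vec q' -> F A' q' <= F A q].

End Model.

(* Main.v *)
Require Import Defs.
From HB Require Import structures.
From mathcomp Require Import all_boot all_order all_algebra.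
From mathcomp Require Import reals.
From mathcomp Require Import ring lra.
Import Order.TTheory GRing.Theory Num.Theory.
Local Open Scope ring_scope.

Section Aux.
Variable R : realType.

Lemma dotvE k (u v : 'cV[R]_k) : dotv u v = \sum_i u i 0 * v i 0.
Proof. rewrite /dotv mxE; apply: eq_bigr => i _; by rewrite mxE. Qed.

Lemma dotvZl k t (u v : 'cV[R]_k) : dotv (t *: u) v = t * dotv u v.
Proof. rewrite !dotvE mulr_sumr; apply: eq_bigr => i _; by rewrite mxE mulrA. Qed.

Lemma dotvZr k t (u v : 'cV[R]_k) : dotv u (t *: v) = t * dotv u v.
Proof. rewrite !dotvE mulr_sumr; apply: eq_bigr => i _; by rewrite mxE mulrCA. Qed.

Lemma dotv_ge0 k (u : 'cV[R]_k) : 0 <= dotv u u.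
Proof. rewrite dotvE; apply: sumr_ge0 => i _; by rewrite -expr2 sqr_ge0. Qed.

Variables (m n : nat) (alpha : R) (beta : 'cV[R]_m) (gamma : 'cV[R]_n).

Lemma Omega_scale (A : 'M[R]_(m, n)) q t :
  Omega alpha beta gamma A (t *: q) =
  t * (alpha * dotv (A *m q) beta + dotv q gamma)
  - t ^+ 2 / 2 * (alpha * dotv (A *m q) (A *m q) + dotv q q).
Proof. rewrite /Omega -scalemxAr !dotvZl !dotvZr. ring. Qed.

Lemma Pi_half (A : 'M[R]_(m, n)) q :
  Pi alpha beta gamma A (2^-1 *: q) = 2^-1 * Omega alpha beta gamma A q.
Proof. rewrite /Pi /Omega -scalemxAr !dotvZl !dotvZr. ring. Qed.

Lemma Pi_dbl (A : 'M[R]_(m, n)) q :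
  Pi alpha beta gamma A q = 2^-1 * Omega alpha beta gamma A (2 *: q).
Proof.
rewrite -Pi_half scalerA mulVf ?scale1r //.
by rewrite pnatr_eq0.
Qed.

Lemma nonneg_scale (q : 'cV[R]_n) c : 0 <= c -> nonneg_vec q -> nonneg_vec (c *: q).
Proof. move=> hc hq i; rewrite mxE; exact: mulr_ge0. Qed.

End Aux.
Arguments nonneg_scale {R n q c}.
Arguments dotv_ge0 {R k}.

Theorem proposition1 (R : realType) (m n : nat) (hn : (2 <= n)%N) (hm : (2 <= m)%N)
  (alpha : R) (beta : 'cV[R]_m) (gamma : 'cV[R]_n)
  (halpha : 0 < alpha) (hbeta : Num.sqrt (sqnorm beta) = 1)
  (hgamma : forall i : 'I_n, 0 < gamma i 0) :
  (forall (Add : 'M[R]_(m, n)) (qdd : 'cV[R]_n),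
     in_calA Add -> nonneg_vec qdd ->
     (is_maximizer (Pi alpha beta gamma) Add qdd <->
      exists (Ad : 'M[R]_(m, n)) (qd : 'cV[R]_n),
        [/\ is_maximizer (Omega alpha beta gamma) Ad qd,
            Add = Ad & qdd = 2^-1 *: qd])) /\
  (forall (Add Ad : 'M[R]_(m, n)) (qdd qd : 'cV[R]_n),
     is_maximizer (Pi alpha beta gamma) Add qdd ->
     is_maximizer (Omega alpha beta gamma) Ad qd ->
     Add = Ad -> qdd = 2^-1 *: qd ->
     Omega alpha beta gamma Add qdd / Omega alpha beta gamma Ad qd = 3 / 4).
Proof.
have h2 : (2 : R) != 0 by rewrite pnatr_eq0.
have h2s : (0 : R) < 2^-1 by rewrite invr_gt0; lra.
have h2p : (0 : R) <= 2^-1 by rewrite invr_ge0; lra.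
split.
  move=> Add qdd hA hq; split.
    case=> _ _ hmax; exists Add, (2 *: qdd); split => //; last first.
      by rewrite scalerA mulVf // scale1r.
    split => //; first by apply: nonneg_scale => //; lra.
    move=> A' q' hA' hq'.
    have := hmax A' (2^-1 *: q') hA' (nonneg_scale h2p hq').
    by rewrite Pi_half Pi_dbl (ler_pM2l h2s).
  case=> Ad [qd [[hAd hqd hmax] eA eq]]; subst; split; [done|done|].
  move=> A' q' hA' hq'.
  rewrite Pi_half Pi_dbl (ler_pM2l h2s).
  apply: hmax => //; apply: nonneg_scale => //; lra.
move=> Add Ad qdd qd _ [hAd hqd hmax] -> ->.
(* a feasible point with positive surplus *)
pose A' : 'M[R]_(m, n) := \matrix_(i, j) beta i 0.
have hA' : in_calA A'.
  move=> j; rewrite -hbeta /sqnorm; congr Num.sqrt.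
  by apply: eq_bigr => i _; rewrite !mxE.
have i0 : 'I_n by exists 0%N; exact: leq_trans hn.
have hgg : 0 < dotv gamma gamma.
  rewrite dotvE (bigD1 i0) //=.
  have := hgamma i0 => hg0.
  have : 0 <= \sum_(i < n | i != i0) gamma i 0 * gamma i 0.
    by apply: sumr_ge0 => i _; rewrite -expr2 sqr_ge0.
  nra.
have hAb : 0 <= dotv (A' *m gamma) beta.
  rewrite dotvE; apply: sumr_ge0 => i _; rewrite mxE.
  rewrite (eq_bigr (fun j => beta i 0 * gamma j 0)); last by move=> j _; rewrite mxE.
  rewrite -mulr_sumr.
  have : 0 <= \sum_(j < n) gamma j 0 by apply: sumr_ge0 => j _; exact: ltW.
  have := sqr_ge0 (beta i 0); rewrite expr2; nra.
set L1 := alpha * dotv (A' *m gamma) beta + dotv gamma gamma.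
set Q1 := alpha * dotv (A' *m gamma) (A' *m gamma) + dotv gamma gamma.
have hL1 : 0 < L1 by rewrite /L1; have := mulr_ge0 (ltW halpha) hAb; lra.
have hQ1 : 0 < Q1.
  rewrite /Q1; have := mulr_ge0 (ltW halpha) (dotv_ge0 (A' *m gamma)); lra.
have hpos := hmax A' ((L1 / Q1) *: gamma) hA'
  (nonneg_scale (ltW (divr_gt0 hL1 hQ1)) (fun i : 'I_n => ltW (hgamma i))).
rewrite Omega_scale -/L1 -/Q1 in hpos.
have e1 : L1 / Q1 * L1 - (L1 / Q1) ^+ 2 / 2 * Q1 = L1 * L1 / Q1 / 2.
  by field; rewrite gt_eqF.
rewrite e1 in hpos.
have hp : 0 < L1 * L1 / Q1 / 2.
  by apply: divr_gt0 => //; apply: divr_gt0 => //; exact: mulr_gt0.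
have hOm : forall t, 0 <= t -> Omega alpha beta gamma Ad (t *: qd) <= Omega alpha beta gamma Ad qd.
  by move=> t ht; apply: hmax => //; exact: nonneg_scale.
pose L := alpha * dotv (Ad *m qd) beta + dotv qd gamma.
pose Q := alpha * dotv (Ad *m qd) (Ad *m qd) + dotv qd qd.
have hOne : Omega alpha beta gamma Ad qd = L - Q / 2.
  by rewrite -{1}(scale1r qd) Omega_scale -/L -/Q; ring.
have key : forall t, 0 <= t -> t * L - t ^+ 2 / 2 * Q <= L - Q / 2.
  by move=> t ht; have := hOm t ht; rewrite Omega_scale -/L -/Q hOne.
have hQ0 : 0 <= Q.
  rewrite /Q; have := mulr_ge0 (ltW halpha) (dotv_ge0 (Ad *m qd)); have := dotv_ge0 qd; lra.
have hpos' : 0 < L - Q / 2.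
  rewrite -hOne; exact: lt_le_trans hp hpos.
have k2 := key 2 (ler0n R 2).
have k12 := key 2^-1 h2p.
have hQ : 0 < Q by nra.
have hL : 0 <= L by nra.
have kLQ := key (L / Q) (divr_ge0 hL (ltW hQ)).
have hLQ : L = Q.
  have e2 : L / Q * L - (L / Q) ^+ 2 / 2 * Q = L * L / Q / 2 by field; rewrite gt_eqF.
  rewrite e2 in kLQ.
  have : L * L <= 2 * Q * (L - Q / 2).
    rewrite -(ler_pM2r (divr_gt0 ltr01 hQ)) .
    have -> : 2 * Q * (L - Q / 2) * (1 / Q) = 2 * (L - Q/2) by field; rewrite gt_eqF.
    have -> : L * L * (1 / Q) = 2 * (L * L / Q / 2) by field; rewrite gt_eqF.
    lra.
  nra.
rewrite hOne Omega_scale -/L -/Q hLQ.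
by field; rewrite gt_eqF //; lra.
Qed.
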